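(* Let $\mathcal{K}\subseteq\mathbb{R}^m$ be a closed convex cone with dual cone $\mathcal{K}^*$, and let $f$ be a $\nu$-logarithmically-homogeneous self-concordant barrier (LHSCB) for $\mathcal{K}$. Let $(x^*,s^*,z^* )$ be a solution of a given (previous) optimization problem, let $\mu^0>0$ and $\lambda>0$. Define $c:=s^*-\lambda z^*$, $$s^0:=S_{\mathcal{K},\mu^0}(c)=\arg\min_{s\in\operatorname{int}\mathcal{K}}\ \tfrac12\|s-c\|_2^2+\mu^0 f(s),\qquad z^0:=\frac{s^0-(s^*-\lambda z^* )}{\lambda},\qquad x^0:=x^*.$$ Then $(s^0,z^0)\in\operatorname{int}\mathcal{K}\times\operatorname{int}\mathcal{K}^*$. Moreover, the point $(x^0,s^0,z^0)$ lies on the central path parametrized by $$R(x,s,z)=\mu r^0,\qquad z=-\mu\nabla f(s),$$ where $r^0=\frac{\lambda}{\mu^0}R(x^0,s^0,z^0)$, and $\langle s^0,z^0\rangle=\frac{\nu\mu^0}{\lambda}$; i.e. $(s^0,z^0)$ is on this central path with parameter $\mu=\mu^0/\lambda$.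
   Context: Consider the conic problem $\min_{x,s}\frac12 x^\top Px+q^\top x$ s.t. $Ax+s=b$, $s\in\mathcal{K}$, with $P\in\mathbb{R}^{n\times n}$ symmetric positive semidefinite, $A\in\mathbb{R}^{m\times n}$, $q\in\mathbb{R}^n$, $b\in\mathbb{R}^m$. The residual map is $$R(x,s,z)=\begin{bmatrix}r_d\\ r_p\end{bmatrix}:=\begin{bmatrix}P & A^\top\\ -A & 0\end{bmatrix}\begin{bmatrix}x\\ z\end{bmatrix}+\begin{bmatrix}q\\ b\end{bmatrix}-\begin{bmatrix}0\\ s\end{bmatrix}.$$ A function $f:\operatorname{int}\mathcal{K}\to\mathbb{R}$ is self-concordant if $f(s)\to+\infty$ along any sequence in $\operatorname{int}\mathcal{K}$ converging to a boundary point of $\mathcal{K}$ and $|\nabla^3 f(s)[r,r,r]|\le 2(\nabla^2 f(s)[r,r])^{3/2}$ for all $s\in\operatorname{int}\mathcal{K}$, $r\in\mathbb{R}^m$; it is a $\nu$-LHSCB (of degree $\nu>0$) if moreover $f(\tau s)=f(s)-\nu\log\tau$ for all $s\in\operatorname{int}\mathcal{K}$, $\tau>0$.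
   Formalization: The cone 𝒦 is moreover pointed, 𝒦 ∩ (−𝒦) = {0}, so the result covers closed convex pointed cones only. The paper assumes this as well. *)

(* Defs.v *)
From HB Require Import structures.
From mathcomp Require Import all_boot all_order all_algebra.
From mathcomp Require Import all_classical all_reals all_analysis.
Set Implicit Arguments. Unset Strict Implicit. Unset Printing Implicit Defensive.
Import Order.TTheory GRing.Theory Num.Theory.
Import numFieldNormedType.Exports.
Local Open Scope classical_set_scope.
Local Open Scope ring_scope.

Section Defs.
Variable R : realType.

Definition dot (m : nat) (u v : 'cV[R]_m) : R := \sum_(i < m) u i 0 * v i 0.

Definition closed_convex_cone (m : nat) (K : set 'cV[R]_m) : Prop :=
  [/\ closed K, K 0,
      (forall x y, K x -> K y -> K (x + y)) &
      (forall (t : R) x, 0 <= t -> K x -> K (t *: x))].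

Definition pointed_cone (m : nat) (K : set 'cV[R]_m) : Prop :=
  forall x, K x -> K (- x) -> x = 0.

Definition dual_cone (m : nat) (K : set 'cV[R]_m) : set 'cV[R]_m :=
  [set z | forall s, K s -> 0 <= dot s z].

Definition unitv (m : nat) (i : 'I_m) : 'cV[R]_m := delta_mx i 0.

Definition grad (m : nat) (f : 'cV[R]_m -> R) (s : 'cV[R]_m) : 'cV[R]_m :=
  \col_i derive f s (unitv i).

Definition D2 (m : nat) (f : 'cV[R]_m -> R) (s r : 'cV[R]_m) : R :=
  derive (fun y => derive f y r) s r.
Definition D3 (m : nat) (f : 'cV[R]_m -> R) (s r : 'cV[R]_m) : R :=
  derive (fun y => derive (fun w => derive f w r) y r) s r.

Definition thrice_differentiable_on (m : nat) (K : set 'cV[R]_m)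
    (f : 'cV[R]_m -> R) : Prop :=
  forall s, interior K s ->
    [/\ differentiable f s,
        (forall r, differentiable (fun y => derive f y r) s) &
        (forall r r', differentiable
            (fun y => derive (fun w => derive f w r) y r') s)].

(* self-concordant function on int K (f only matters on int K) *)
Definition self_concordant (m : nat) (K : set 'cV[R]_m) (f : 'cV[R]_m -> R) : Prop :=
  [/\ thrice_differentiable_on K f,
      (forall (u : nat -> 'cV[R]_m) (sb : 'cV[R]_m),
          (forall k, interior K (u k)) -> u @ \oo --> sb ->
          K sb -> ~ interior K sb ->
          (fun k => f (u k)) @ \oo --> +oo) &
      (forall s r, interior K s ->
          0 <= D2 f s r /\ `|D3 f s r| <= 2 * (D2 f s r) `^ (3%:R / 2%:R))].

Definition LHSCB (m : nat) (K : set 'cV[R]_m) (f : 'cV[R]_m -> R) (nu : R) : Prop :=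
  [/\ 0 < nu, self_concordant K f &
      forall s (tau : R), interior K s -> 0 < tau ->
        f (tau *: s) = f s - nu * ln tau].

(* residual map R(x,s,z) = [P A^T; -A 0][x; z] + [q; b] - [0; s] *)
Definition resid (n m : nat) (P : 'M[R]_n) (A : 'M[R]_(m, n)) (q : 'cV[R]_n)
    (b : 'cV[R]_m) (x : 'cV[R]_n) (s z : 'cV[R]_m) : 'cV[R]_(n + m) :=
  col_mx (P *m x + A^T *m z + q) (- (A *m x) + b - s).

Definition prox_obj (m : nat) (f : 'cV[R]_m -> R) (mu : R) (c s : 'cV[R]_m) : R :=
  2%:R^-1 * dot (s - c) (s - c) + mu * f s.

End Defs.

(* Main.v *)
Require Import Defs.
From HB Require Import structures.
From mathcomp Require Import all_boot all_order all_algebra.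
From mathcomp Require Import all_classical all_reals all_analysis.
From mathcomp Require Import ring lra.
Import Order.TTheory GRing.Theory Num.Theory.
Import numFieldNormedType.Exports.
Local Open Scope classical_set_scope.
Local Open Scope ring_scope.
Set Implicit Arguments. Unset Strict Implicit.


Section A.
Variables (R : realType) (m : nat).
Implicit Types (K : set 'cV[R]_m).

Lemma int_ballP K y : interior K y <-> exists2 e : R, 0 < e & forall w, `|y - w| < e -> K w.
Proof.
rewrite /interior /=; split.
  move=> /(@nbhs_normP R 'cV[R]_m y K) [e e0 he]; exists e => // w hw; exact: he.
by move=> [e e0 he]; apply/(@nbhs_normP R 'cV[R]_m y K); exists e => // w hw; exact: he.
Qed.

Lemma int_scale K y (c : R) : closed_convex_cone K -> interior K y -> 0 < c -> interior K (c *: y).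
Proof.
move=> [_ _ _ Ksc] /int_ballP [e e0 he] c0; apply/int_ballP; exists (c * e).
  exact: mulr_gt0.
move=> w hw; have -> : w = c *: (c^-1 *: w) by rewrite scalerA divff ?gt_eqF// scale1r.
apply: Ksc; first exact: ltW.
apply: he; rewrite -[y](scale1r) -(mulVf (lt0r_neq0 c0)) -scalerA -scalerBr normrZ.
by rewrite gtr0_norm ?invr_gt0// ltr_pdivrMl.
Qed.

Lemma int_add K y k : closed_convex_cone K -> interior K y -> K k -> interior K (y + k).
Proof.
move=> [_ _ Kadd _] /int_ballP [e e0 he] Kk; apply/int_ballP; exists e => // w hw.
have -> : w = (w - k) + k by rewrite subrK.
apply: Kadd => //; apply: he; by rewrite opprB addrA.
Qed.

End A.


Section B.
Variables (R : realType) (m : nat).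
Implicit Types (K : set 'cV[R]_m) (g : 'cV[R]_m -> R).

Lemma line_quot g y d t :
  (fun h : R => h^-1 *: (((fun t : R => g (y + t *: d)) \o shift t) (h *: 1) - g (y + t *: d)))
  = (fun h : R => h^-1 *: ((g \o shift (y + t *: d)) (h *: d) - g (y + t *: d))).
Proof.
apply/funext => h /=; congr (_ *: (g _ - _)).
by rewrite [h *: 1]mulr1 scalerDl addrCA addrA.
Qed.

Lemma line_is_derive g y d t : derivable g (y + t *: d) d ->
  is_derive t 1 (fun t : R => g (y + t *: d)) (derive g (y + t *: d) d).
Proof.
move=> dg; split.
  by rewrite /derivable line_quot.
by rewrite /derive line_quot.
Qed.

Lemma derive_lin g y u v : differentiable g y ->
  derive g y (u + v) = derive g y u + derive g y v.
Proof. by move=> dg; rewrite !deriveE// linearD. Qed.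

Lemma derive_linZ g y (c : R) u : differentiable g y ->
  derive g y (c *: u) = c * derive g y u.
Proof. by move=> dg; rewrite !deriveE// linearZ. Qed.

Lemma derive_sumv g y v : differentiable g y ->
  derive g y v = \sum_(i < m) v i 0 * derive g y (unitv R i).
Proof.
move=> dg; rewrite deriveE//.
have ev : v = \sum_(i < m) v i 0 *: unitv R i.
  apply/matrixP => i j; rewrite summxE (bigD1 i)//= big1 ?addr0.
    by rewrite !mxE ord1 !eqxx mulr1.
  by move=> k ki; rewrite !mxE eq_sym (negbTE ki) mulr0.
rewrite {1}ev linear_sum; apply: eq_bigr => i _.
by rewrite linearZ /= deriveE.
Qed.

End B.


Section C.
Variable R : realType.
Implicit Types (phi dphi : R -> R).

Lemma mono_le phi dphi (a b : R) : a <= b ->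
  (forall x, x \in `[a, b] -> is_derive x 1 phi (dphi x)) ->
  (forall x, x \in `]a, b[ -> 0 <= dphi x) -> phi a <= phi b.
Proof.
move=> ab hd hpos.
have sub : forall x, x \in `]a, b[ -> x \in `[a, b].
  by move=> x; rewrite !in_itv /= => /andP[h1 h2]; rewrite !ltW.
apply: (@ger0_derive1_le_cc R phi a b).
- by move=> x /sub /hd [].
- by move=> x xab; rewrite derive1E (@derive_val _ _ _ _ _ _ _ (hd x (sub x xab))); exact: hpos.
- by apply: derivable_within_continuous => x /hd [].
- by rewrite in_itv /= lexx ab.
- by rewrite in_itv /= lexx ab.
- exact: ab.
Qed.

Lemma const_eq phi dphi (a b : R) : a <= b ->
  (forall x, x \in `[a, b] -> is_derive x 1 phi (dphi x)) ->
  (forall x, x \in `]a, b[ -> dphi x = 0) -> phi a = phi b.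
Proof.
move=> ab hd h0; apply/eqP; rewrite eq_le; apply/andP; split.
  apply: (@mono_le phi dphi a b ab hd) => x /h0 ->; exact: lexx.
rewrite -lerN2; apply: (@mono_le (fun x => - phi x) (fun x => - dphi x) a b ab).
  by move=> x /hd hx; exact: is_deriveN.
by move=> x /h0 ->; rewrite oppr0.
Qed.

Lemma conv_ineq phi dphi ddphi (a b : R) : a <= b ->
  (forall x, x \in `[a, b] -> is_derive x 1 phi (dphi x)) ->
  (forall x, x \in `[a, b] -> is_derive x 1 dphi (ddphi x)) ->
  (forall x, x \in `]a, b[ -> 0 <= ddphi x) ->
  dphi a * (b - a) <= phi b - phi a.
Proof.
move=> ab hd hdd hpos.
have [c cab ->] := @MVT_segment R phi dphi a b ab
   (fun x xab => hd x (subset_itv_oo_cc xab))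
   (derivable_within_continuous (fun x xab => @ex_derive _ _ _ _ _ _ _ (hd x xab))).
rewrite ler_wpM2r ?subr_ge0//.
have ac : a <= c by move: cab; rewrite in_itv /= => /andP[].
have cb : c <= b by move: cab; rewrite in_itv /= => /andP[].
apply: (@mono_le dphi ddphi a c ac).
  by move=> x xac; apply: hdd; move: xac; rewrite !in_itv /= => /andP[-> /le_trans ->].
by move=> x xac; apply: hpos; move: xac; rewrite !in_itv /= => /andP[-> /lt_le_trans ->].
Qed.

End C.


Section D.
Variable R : realType.
Implicit Types (phi dphi : R -> R).

Lemma is_derive_expL (L x : R) :
  is_derive x 1 (fun y => expR (L * y)) (expR (L * x) * L).
Proof.
have h1 : is_derive x 1 (fun y : R => L * y) L.
  have h := @is_deriveZ R R R id L x 1 1 (is_derive_id x 1).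
  have e : (L \*: (@id R)) = (fun y : R => L * y) by apply/funext.
  rewrite e in h; apply: (is_derive_eq h); by rewrite /GRing.scale /= mulr1.
exact: (@is_derive1_comp R expR (fun y => L * y) x _ _ (is_derive_expR _) h1).
Qed.

Lemma sc_zero phi dphi (a b : R) : a <= b ->
  (forall x, x \in `[a, b] -> is_derive x 1 phi (dphi x)) ->
  (forall x, x \in `[a, b] -> 0 <= phi x) ->
  (forall x, x \in `[a, b] -> `|dphi x| <= 2 * phi x `^ (3%:R / 2%:R)) ->
  phi b = 0 -> forall x, x \in `[a, b] -> phi x = 0.
Proof.
move=> ab hd hpos hsc hb.
have [c cab hM] := EVT_max ab (derivable_within_continuous (fun x xab => @ex_derive _ _ _ _ _ _ _ (hd x xab))).
set M := phi c in hM.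
have M0 : 0 <= M by exact: hpos.
pose L := 2 * M `^ (2^-1).
have hdd : forall x, x \in `]a, b[ -> 0 <= dphi x + L * phi x.
  move=> x xab; have xab' := subset_itv_oo_cc xab.
  have p0 := hpos x xab'.
  have e1 : phi x `^ (3%:R / 2%:R) = phi x * phi x `^ (2^-1).
    rewrite (_ : 3%:R / 2%:R = 1 + 2^-1); last first.
      by field.
    rewrite powRD; last by rewrite implybE; apply/orP; left; rewrite gt_eqF// addr_gt0// invr_gt0.
    by rewrite powRr1.
  have e2 : phi x `^ (2^-1) <= M `^ (2^-1).
    by apply: ge0_ler_powR => //; apply: hM.
  have := hsc x xab'; rewrite e1 => h.
  have h2 : - dphi x <= L * phi x.
    apply: le_trans (ler_norm _) _; rewrite normrN (le_trans h)// /L -mulrA ler_wpM2l//.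
    by rewrite mulrC ler_wpM2r.
  lra.
move=> x xab.
pose g y := phi y * expR (L * y).
have hg : forall y, y \in `[x, b] -> is_derive y 1 g (expR (L * y) * (dphi y + L * phi y)).
  move=> y yxb.
  have yab : y \in `[a, b].
    by move: xab yxb; rewrite !in_itv /= => /andP[ax _] /andP[xy ->]; rewrite (le_trans ax xy).
  apply: is_derive_eq.
    exact: (@is_deriveM R R phi (fun y => expR (L * y)) y 1 _ _ (hd y yab) (is_derive_expL L y)).
  rewrite /GRing.scale /=; ring.
have xb : x <= b by move: xab; rewrite in_itv /= => /andP[].
have := @mono_le R g _ x b xb hg.
move=> /(_ _) hle.
have : g x <= g b.
  apply: hle => y yxb; apply: mulr_ge0; first exact: expR_ge0.
  apply: hdd; move: xab yxb; rewrite !in_itv /= => /andP[ax _] /andP[xy ->]; rewrite andbT.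
  exact: le_lt_trans ax xy.
rewrite /g hb mul0r => h.
have he := expR_gt0 (L * x).
have h' : phi x <= 0 by rewrite -(pmulr_lle0 _ he).
by apply/eqP; rewrite eq_le h' hpos.
Qed.

End D.


Section E.
Variables (R : realType) (m : nat) (K : set 'cV[R]_m) (f : 'cV[R]_m -> R) (nu : R).
Hypotheses (Kc : closed_convex_cone K) (Kp : pointed_cone K) (Hf : LHSCB K f nu).

Lemma f_diff y : interior K y -> differentiable f y.
Proof. by case: Hf => _ [hd _ _] _ /hd []. Qed.

Lemma f1_diff y r : interior K y -> differentiable (fun w => derive f w r) y.
Proof. by case: Hf => _ [hd _ _] _ /hd []. Qed.

Lemma f2_diff y r : interior K y ->
  differentiable (fun w => derive (fun w' => derive f w' r) w r) y.
Proof. by case: Hf => _ [hd _ _] _ /hd [_ _]; apply. Qed.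

Lemma nu_gt0 : 0 < nu. Proof. by case: Hf. Qed.

Lemma fhom y (t : R) : interior K y -> 0 < t -> f (t *: y) = f y - nu * ln t.
Proof. by case: Hf => _ _ h; apply: h. Qed.

Lemma int_K y : interior K y -> K y.
Proof. exact: interior_subset. Qed.

Lemma euler y : interior K y -> derive f y y = - nu.
Proof.
move=> yK.
have hd : derivable f (0 + 1 *: y) y.
  by rewrite add0r scale1r; apply: diff_derivable; exact: f_diff.
have h1 := @line_is_derive _ _ _ _ _ _ hd.
have h2 : is_derive (1 : R) 1 (cst (f y) - nu \*: (@ln R)) (0 - nu *: (1 : R)^-1).
  by apply: is_deriveB; apply: is_deriveZ; apply: is_derive1_ln.
have h3 : is_derive (1 : R) 1 (fun t : R => f (0 + t *: y)) (0 - nu *: (1 : R)^-1).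
  apply: near_eq_is_derive h2.
  near=> t.
  have t0 : 0 < t by near: t; exact: lt_nbhsr.
  by rewrite add0r fhom //.
have e1 := @derive_val _ _ _ _ _ _ _ h1.
have e3 := @derive_val _ _ _ _ _ _ _ h3.
rewrite e3 (_ : 0 + 1 *: y = y) in e1; last by rewrite add0r scale1r.
rewrite -e1.
by rewrite /GRing.scale /= invr1 mulr1 sub0r.
Unshelve. all: by end_near.
Qed.

End E.


Section F.
Variables (R : realType) (m : nat) (K : set 'cV[R]_m) (f : 'cV[R]_m -> R) (nu : R).
Hypotheses (Kc : closed_convex_cone K) (Kp : pointed_cone K) (Hf : LHSCB K f nu).

Lemma Kscale (t : R) x : 0 <= t -> K x -> K (t *: x).
Proof. by case: Kc => _ _ _ h; apply: h. Qed.

Lemma D2_ge0 y r : interior K y -> 0 <= D2 f y r.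
Proof. by case: Hf => _ [_ _ h] _ /(h y r) []. Qed.

Lemma D3_le y r : interior K y -> `|D3 f y r| <= 2 * (D2 f y r) `^ (3%:R / 2%:R).
Proof. by case: Hf => _ [_ _ h] _ /(h y r) []. Qed.

Lemma line_d0 y d t : interior K (y + t *: d) ->
  is_derive t 1 (fun t : R => f (y + t *: d)) (derive f (y + t *: d) d).
Proof.
move=> yK; apply: (@line_is_derive _ _ f).
by apply: diff_derivable; exact: (f_diff Hf).
Qed.

Lemma line_d1 y d t : interior K (y + t *: d) ->
  is_derive t 1 (fun t : R => derive f (y + t *: d) d)
     (derive (fun w => derive f w d) (y + t *: d) d).
Proof.
move=> yK; apply: (@line_is_derive _ _ (fun w => derive f w d)).
by apply: diff_derivable; exact: (f1_diff Hf).
Qed.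

Lemma line_d2 y d t : interior K (y + t *: d) ->
  is_derive t 1 (fun t : R => derive (fun w => derive f w d) (y + t *: d) d)
     (derive (fun w => derive (fun w' => derive f w' d) w d) (y + t *: d) d).
Proof.
move=> yK; apply: (@line_is_derive _ _ (fun w => derive (fun w' => derive f w' d) w d)).
by apply: diff_derivable; exact: (f2_diff Hf).
Qed.

Lemma ray_int y d t : interior K y -> K d -> 0 <= t -> interior K (y + t *: d).
Proof. by move=> yK dK t0; apply: int_add => //; exact: Kscale. Qed.

Lemma weak_int y d : interior K y -> interior K d -> derive f y d <= 0.
Proof.
move=> yK dK.
have dK' := int_K dK.
set hh := fun t : R => f (y + t *: d).
have conv : forall t, 0 <= t -> derive f y d * t <= hh t - hh 0.
  move=> t t0.
  have := @conv_ineq R hh (fun t => derive f (y + t *: d) d)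
    (fun t => derive (fun w => derive f w d) (y + t *: d) d) 0 t t0.
  rewrite scale0r addr0 subr0; apply.
  - move=> x; rewrite in_itv /= => /andP[x0 _]; apply: line_d0; exact: ray_int.
  - move=> x; rewrite in_itv /= => /andP[x0 _]; apply: line_d1; exact: ray_int.
  - move=> x; rewrite in_itv /= => /andP[x0 _]; apply: D2_ge0; apply: ray_int => //; exact: ltW.
rewrite leNgt; apply/negP => D0.
set D := derive f y d in conv D0.
have fc := differentiable_continuous (f_diff Hf dK).
have := (cvgrPdist_lt _ _).1 fc 1 ltr01.
move=> /(_ (nbhs_filter d)) /nbhs_normP [de de0 hde].
set A := `|f d + 1 - f y|.
pose t := 1 + `|y| / de + A / D.
have A0 : 0 <= A by exact: normr_ge0.
have q1 : 0 <= `|y| / de by apply: divr_ge0 => //; exact: ltW.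
have q2 : 0 <= A / D by apply: divr_ge0 => //; exact: ltW.
have t1 : 1 <= t by rewrite /t; lra.
have t0 : 0 < t by apply: lt_le_trans t1.
pose w := t^-1 *: y + d.
have wK : interior K w by rewrite /w addrC; apply: int_add => //; apply: Kscale => //; [rewrite invr_ge0 ltW | exact: int_K].
have ew : y + t *: d = t *: w by rewrite /w scalerDr scalerA divff ?gt_eqF// scale1r.
have hw : `|d - w| < de.
  rewrite /w opprD addrCA subrr addr0 normrN normrZ gtr0_norm ?invr_gt0//.
  rewrite ltr_pdivrMl// /t.
  have e : `|y| / de * de = `|y| by rewrite divfK ?gt_eqF.
  have p : 0 <= A / D * de by apply: mulr_ge0 => //; exact: ltW.
  have de1 : 0 < de := de0.
  rewrite /t !mulrDl mul1r; lra.
have fw : f w < f d + 1.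
  have := hde w hw; rewrite /= => h.
  have := ler_norm (f w - f d); rewrite distrC in h; lra.
have := conv t (ltW t0).
rewrite /hh ew (fhom Hf) // scale0r addr0.
have lt0 : 0 <= ln t by apply: ln_ge0.
have nu0 := nu_gt0 Hf.
have hDt : A < D * t.
  have eA : D * (A / D) = A by rewrite mulrC divfK ?gt_eqF.
  rewrite /t !mulrDr mulr1 eA.
  have : 0 <= D * (`|y| / de) by apply: mulr_ge0; [exact: ltW | apply: divr_ge0 => //; exact: ltW].
  lra.
have := ler_norm (f d + 1 - f y); rewrite -/A.
move=> hA h.
have : 0 <= nu * ln t by apply: mulr_ge0 => //; exact: ltW.
lra.
Qed.

Lemma weak y d : interior K y -> K d -> derive f y d <= 0.
Proof.
move=> yK dK.
have nu0 := nu_gt0 Hf.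
rewrite leNgt; apply/negP => D0.
pose e := derive f y d / (2 * nu).
have e0 : 0 < e by rewrite /e divr_gt0// mulr_gt0.
have hi : interior K (d + e *: y).
  by rewrite addrC; apply: int_add => //; exact: int_scale.
have := weak_int yK hi.
rewrite (derive_lin _ _ (f_diff Hf yK)) (derive_linZ _ _ (f_diff Hf yK)) (euler Hf yK).
have ee : e * nu = derive f y d / 2.
  by rewrite /e invfM mulrA -mulrA (mulrC nu^-1) divff ?gt_eqF// mulr1 mulrC.
rewrite mulrN ee; lra.
Qed.

End F.


Section G.
Variables (R : realType) (m : nat) (K : set 'cV[R]_m).
Hypotheses (Kc : closed_convex_cone K) (Kp : pointed_cone K).

Lemma Kadd x y : K x -> K y -> K (x + y).
Proof. by case: Kc => _ _ h _; apply: h. Qed.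

Lemma Ksc (t : R) x : 0 <= t -> K x -> K (t *: x).
Proof. by case: Kc => _ _ _ h; apply: h. Qed.

Lemma Kclosed : closed K. Proof. by case: Kc. Qed.

Lemma comb_eq (s d : 'cV[R]_m) (t t' : R) : t' != 0 ->
  s - t *: d = (1 - t / t') *: s + (t / t') *: (s - t' *: d).
Proof.
move=> t0; rewrite scalerBr scalerA divfK// scalerBl scale1r.
by rewrite addrA subrK.
Qed.

Lemma diff_eq (s d : 'cV[R]_m) (a b : R) : (s - a *: d) - (s - b *: d) = (b - a) *: d.
Proof. by rewrite opprB addrC addrA subrK scalerBl. Qed.

Lemma small_del (e nd x : R) : 0 < e -> 0 <= nd -> 0 <= x -> x <= e / (nd + 1) -> x * nd < e.
Proof.
move=> e0 nd0 x0 xle.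
have nd1 : 0 < nd + 1 by lra.
have : x * (nd + 1) <= e by rewrite -ler_pdivlMr.
have : 0 <= x * nd by exact: mulr_ge0.
have : x * (nd + 1) = x * nd + x by rewrite mulrDr mulr1.
move=> ->.
have [x0'|xp] := eqVneq x 0.
  by rewrite x0' mul0r => _ _; exact: e0.
have : 0 < x by rewrite lt_def xp x0.
lra.
Qed.

Lemma exit_time s d : interior K s -> K d -> d != 0 ->
  exists T : R, [/\ 0 < T, (forall t, 0 <= t -> t < T -> interior K (s - t *: d)),
     K (s - T *: d) & ~ interior K (s - T *: d)].
Proof.
move=> sK dK d0.
have sK' : K s by exact: interior_subset.
pose A := [set t : R | 0 <= t /\ K (s - t *: d)].
have A0 : A 0 by split => //; rewrite scale0r subr0.
have Aconv : forall t t', A t' -> 0 <= t -> t <= t' -> A t.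
  move=> t t' [t'0 Kt'] t0 tt'; split => //.
  have [e|t'n0] := eqVneq t' 0.
    have -> : t = 0 by apply/eqP; rewrite eq_le t0 andbT -e.
    by rewrite scale0r subr0.
  rewrite (comb_eq _ _ _ t'n0); apply: Kadd; apply: Ksc => //.
  - by rewrite subr_ge0 ler_pdivrMr ?mul1r// lt_def t'n0 t'0.
  - by rewrite divr_ge0.
have hub : has_ubound A.
  apply: contrapT => hn.
  have big : forall M : R, exists2 t, A t & M < t.
    move=> M; apply: contrapT => hM; apply: hn; exists M => t At.
    rewrite leNgt; apply/negP => Mt; apply: hM; by exists t.
  have Kn : forall n : nat, K (s - n%:R *: d).
    move=> n; have [t At nt] := big n%:R.
    exact: (Aconv n%:R t At (ler0n _ _) (ltW nt)).2.
  have Knd : K (- d).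
    have e : (fun n : nat => (n.+1%:R)^-1 *: (s - n.+1%:R *: d)) = (fun n => harmonic n *: s + (- d)).
      apply/funext => n; rewrite scalerBr scalerA mulVf ?pnatr_eq0// scale1r.
      by rewrite /harmonic.
    apply: (@closed_cvg nat _ \oo _ (fun n : nat => (n.+1%:R)^-1 *: (s - n.+1%:R *: d)) K Kclosed).
      by near=> n; apply: Ksc; [rewrite invr_ge0 | exact: Kn].
    rewrite e -[X in _ --> X]add0r; apply: cvgD; last exact: cvg_cst.
    rewrite -(scale0r s); apply: cvgZ; [exact: cvg_harmonic | exact: cvg_cst].
  by move: d0; rewrite (Kp dK Knd) eqxx.
have hs : has_sup A by split => //; exists 0.
pose T := sup A.
have T0 : 0 <= T by apply: sup_upper_bound.
have hint : forall t, 0 <= t -> t < T -> interior K (s - t *: d).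
  move=> t t0 tT.
  have Tt : 0 < T - t by rewrite subr_gt0.
  have [t' [t'0 Kt'] ht'] := @sup_adherent R A (T - t) Tt hs.
  have tt' : t < t' by move: ht'; rewrite opprB addrCA subrr addr0.
  have t'p : 0 < t' by exact: le_lt_trans tt'.
  rewrite (comb_eq _ _ _ (lt0r_neq0 t'p)); apply: int_add => //; last first.
    by apply: Ksc => //; rewrite divr_ge0// ltW.
  apply: int_scale => //.
  by rewrite subr_gt0 ltr_pdivrMr ?mul1r.
have Kb : K (s - T *: d).
  apply: Kclosed => B /(@nbhs_normP R 'cV[R]_m _ B) [e e0 he].
  have e1 : 0 < e := e0.
  pose del := e / (`|d| + 1).
  have del0 : 0 < del by rewrite /del divr_gt0// ltr_wpDl.
  have [t' [t'0 Kt'] ht'] := sup_adherent del0 hs.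
  have t'T : t' <= T by apply: sup_upper_bound.
  exists (s - t' *: d); split => //; apply: he; rewrite /= diff_eq normrZ ler0_norm ?subr_le0//.
  have h1 : T - del < t' := ht'. apply: small_del => //; [lra | rewrite -/del; lra].
have Nint : ~ interior K (s - T *: d).
  move=> /int_ballP [e e0 he].
  pose del := e / (`|d| + 1).
  have del0 : 0 < del by rewrite /del divr_gt0// ltr_wpDl.
  have : A (T + del).
    split; first lra.
    apply: he; rewrite diff_eq normrZ (_ : T + del - T = del); last by rewrite addrAC subrr add0r.
    by rewrite gtr0_norm//; apply: small_del => //; exact: ltW.
  move=> /(sup_upper_bound hs); rewrite -/T; lra.
exists T; split => //.
rewrite lt_def T0 andbT; apply/eqP => eT; apply: Nint.
by rewrite eT scale0r subr0.
Unshelve. all: by end_near.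
Qed.

End G.


Section H.
Variables (R : realType) (m : nat) (K : set 'cV[R]_m) (f : 'cV[R]_m -> R) (nu : R).
Hypotheses (Kc : closed_convex_cone K) (Kp : pointed_cone K) (Hf : LHSCB K f nu).

Lemma strict s d : interior K s -> K d -> d != 0 -> derive f s d < 0.
Proof.
move=> sK dK d0.
rewrite ltNge; apply/negP => h0.
pose hh := fun t : R => f (s + t *: d).
pose h1 := fun t : R => derive f (s + t *: d) d.
pose h2 := fun t : R => derive (fun w => derive f w d) (s + t *: d) d.
pose h3 := fun t : R => derive (fun w => derive (fun w' => derive f w' d) w d) (s + t *: d) d.
have [T [T0 hint Kb Nint]] := exit_time Kc Kp sK dK d0.
have lint : forall t, - T < t -> interior K (s + t *: d).
  move=> t tT; have [t0|tn] := leP 0 t; first exact: ray_int.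
  rewrite -[t]opprK scaleNr; apply: hint; lra.
have h1z : forall t, 0 <= t -> h1 t = 0.
  move=> t t0; apply/eqP; rewrite eq_le; apply/andP; split.
    by apply: (weak Kc Hf) => //; exact: ray_int.
  have : h1 0 <= h1 t.
    apply: (@mono_le R h1 h2 0 t t0) => x; rewrite in_itv /= => /andP[x0 xt].
      by apply: (line_d1 Hf); apply: lint; lra.
    by apply: (D2_ge0 Hf); apply: lint; lra.
  have -> : h1 0 = derive f s d by rewrite /h1 scale0r addr0.
  lra.
have h21 : h2 1 = 0.
  have hd1 : is_derive (1 : R) 1 h1 (h2 1) by apply: (line_d1 Hf); apply: lint; lra.
  have hc : is_derive (1 : R) 1 h1 0.
    apply: (near_eq_is_derive _ (is_derive_cst (0 : R) (1 : R) 1)).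
    near=> t.
    have t0 : 0 < t by near: t; exact: lt_nbhsr.
    by rewrite /cst h1z // ltW.
  by rewrite -(@derive_val _ _ _ _ _ _ _ hd1) (@derive_val _ _ _ _ _ _ _ hc).
have hconst : forall t, 0 <= t -> t < T -> f (s - t *: d) = f s.
  move=> t t0 tT.
  have mt1 : - t <= 1 by lra.
  have inI : forall x, x \in `[- t, 1] -> interior K (s + x *: d).
    by move=> x; rewrite in_itv /= => /andP[x0 _]; apply: lint; lra.
  have h2z := @sc_zero R h2 h3 (- t) 1 mt1
    (fun x xI => line_d2 Hf (inI x xI))
    (fun x xI => D2_ge0 Hf d (inI x xI))
    (fun x xI => D3_le Hf d (inI x xI)) h21.
  have h1z' : forall x, x \in `[- t, 1] -> h1 x = 0.
    move=> x xI.
    have x1 : x <= 1 by move: xI; rewrite in_itv /= => /andP[].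
    transitivity (h1 1); last by apply: h1z.
    apply: (@const_eq R h1 h2 x 1 x1).
      move=> y; rewrite !in_itv /= => /andP[xy y1]; apply: (line_d1 Hf); apply: inI.
      by move: xI; rewrite !in_itv /= => /andP[tx _]; rewrite y1 andbT (le_trans tx).
    move=> y; rewrite !in_itv /= => /andP[xy y1]; apply: h2z.
    by move: xI; rewrite !in_itv /= => /andP[tx _]; rewrite (ltW y1) andbT (le_trans tx)// ltW.
  have mt0 : - t <= 0 by lra.
  have := @const_eq R hh h1 (- t) 0 mt0.
  rewrite /hh scale0r addr0 scaleNr; apply.
    move=> y; rewrite !in_itv /= => /andP[ty y0]; apply: (line_d0 Hf); apply: inI.
    by rewrite in_itv /= ty /= (le_trans y0).
  move=> y; rewrite !in_itv /= => /andP[ty y0]; apply: h1z'.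
  by rewrite in_itv /= (ltW ty) /= (le_trans (ltW y0)).
pose u k := s - (T - T * harmonic k) *: d.
have hk : forall k : nat, 0 <= T - T * harmonic k /\ T - T * harmonic k < T.
  move=> k; have hp : 0 < harmonic k :> R by rewrite /harmonic /= invr_gt0 ltr0n.
  have h1' : harmonic k <= 1 :> R by rewrite /harmonic /= invf_le1 ?ler1n ?ltr0n.
  split; last by rewrite ltrBlDr ltrDl mulr_gt0.
  by rewrite subr_ge0 ger_pMr.
have uint : forall k, interior K (u k) by move=> k; have [? ?] := hk k; exact: hint.
have ucvg : u @ \oo --> s - T *: d.
  have e : u = (fun k => (s - T *: d) + (T * harmonic k) *: d).
    by apply/funext => k; rewrite /u scalerBl opprB addrCA addrC.
  rewrite e -[X in _ --> X]addr0; apply: cvgD; first exact: cvg_cst.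
  rewrite -(scale0r d) -(mulr0 T); apply: cvgZ; last exact: cvg_cst.
  apply: cvgMl_tmp; exact: cvg_harmonic.
have := Hf; case => _ [_ hb _] _.
have := hb u _ uint ucvg Kb Nint.
move=> /cvgryPge /(_ (f s + 1)) [N _ hN].
have := hN N (leqnn N).
rewrite /= /u hconst; [lra | by case: (hk N) | by case: (hk N)].
Unshelve. all: by end_near.
Qed.

End H.


Section I.
Variable R : realType.

Lemma mx_entry_le (p q : nat) (A : 'M[R]_(p, q)) i j : `|A i j| <= `|A|.
Proof.
have -> : `|A| = mx_norm A by [].
rewrite mx_normrE.
exact: (le_bigmax _ (fun ij : 'I_p * 'I_q => `|A ij.1 ij.2|) (i, j)).
Qed.

Lemma mx_norm_tr_le (p q : nat) (A : 'M[R]_(p, q)) : `|A^T| <= `|A|.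
Proof.
have -> : `|A^T| = mx_norm A^T by [].
rewrite mx_normrE; apply/bigmax_leP; split => //= [ij _].
by rewrite mxE; exact: mx_entry_le.
Qed.

Lemma mx_norm_tr (p q : nat) (A : 'M[R]_(p, q)) : `|A^T| = `|A|.
Proof.
apply/eqP; rewrite eq_le mx_norm_tr_le /=.
by rewrite -{1}(trmxK A) mx_norm_tr_le.
Qed.

Lemma trmx_continuous (p q : nat) : continuous (fun A : 'M[R]_(p, q) => A^T).
Proof.
move=> A; apply/(@cvgrPdist_lt _ _ _ _ (nbhs_filter A)) => e e0.
apply/(@nbhs_normP R 'M[R]_(p, q) A); exists e => // B hB.
by rewrite /= -linearB /= mx_norm_tr.
Qed.

End I.

Section I2.
Variables (R : realType) (m : nat) (K : set 'cV[R]_m) (f : 'cV[R]_m -> R) (nu : R).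
Hypotheses (Kc : closed_convex_cone K) (Kp : pointed_cone K) (Hf : LHSCB K f nu).

Lemma coercive s : interior K s ->
  exists2 eps : R, 0 < eps & forall d, K d -> eps * `|d| <= - derive f s d.
Proof.
move=> sK.
pose S : set 'rV[R]_m := [set r | K r^T /\ `|r| = 1].
pose F (r : 'rV[R]_m) := - derive f s (r^T).
have dfs := f_diff Hf sK.
have Fc : continuous F.
  have -> : F = (fun r : 'rV[R]_m => - ('d f s \o (fun r : 'rV[R]_m => r^T)) r).
    by apply/funext => r; rewrite /F deriveE.
  move=> r; apply: continuousN; apply: continuous_comp; first exact: trmx_continuous.
  exact: diff_continuous.
have hd0 : forall d, K d -> d != 0 -> (`|d|^-1 *: d)^T \in S.
  move=> d dK d0; rewrite inE; split; first by rewrite trmxK; apply: Ksc => //; rewrite invr_ge0.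
  by rewrite mx_norm_tr normrZ normfV normr_id mulVf // normr_eq0.
have [Sne|Se] := pselect (S !=set0); last first.
  exists 1 => // d dK.
  have [->|d0] := eqVneq d 0; first by rewrite normr0 mulr0 derive0 oppr0.
  by exfalso; apply: Se; exists (`|d|^-1 *: d)^T; rewrite -inE; exact: hd0.
have cS : compact S.
  apply: bounded_closed_compact.
    exists 1; split => // x x1 r [_ /= ->]; exact: ltW.
  have -> : S = (fun r : 'rV[R]_m => r^T) @^-1` K `&` (fun r : 'rV[R]_m => `|r|) @^-1` [set x : R | x = 1].
    by [].
  apply: closedI.
    by apply: preimage_closed; [move=> r _; exact: trmx_continuous | exact: Kclosed].
  by apply: preimage_closed; [move=> r _; exact: norm_continuous | exact: closed_eq].
have [c cS' cmin] := compact_EVT_min Sne cS (continuous_subspaceT Fc).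
have [cK c1] : S c by rewrite -inE.
have cT0 : c^T != 0.
  by apply/eqP => e; move: c1; rewrite -mx_norm_tr e normr0 => /eqP; rewrite eq_sym oner_eq0.
exists (F c).
  by rewrite /F oppr_gt0; exact: (strict Kc Kp Hf sK cK cT0).
move=> d dK.
have [->|d0] := eqVneq d 0; first by rewrite normr0 mulr0 derive0 oppr0.
have := cmin _ (hd0 d dK d0).
rewrite /F trmxK (derive_linZ _ _ dfs) => h.
have nd : 0 < `|d| by rewrite normr_gt0.
set D := derive f s d in h *.
set Fc0 := - derive f s c^T in h *.
have : Fc0 * `|d| <= - (`|d|^-1 * D) * `|d| by rewrite ler_wpM2r // ltW.
have e : - (`|d|^-1 * D) * `|d| = - D by rewrite mulNr mulrAC mulVf ?gt_eqF // mul1r.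
by rewrite e.
Qed.

End I2.


Section J.
Variables (R : realType) (m : nat).

Lemma dot_expand (v : 'cV[R]_m) (t : R) i :
  dot (v + t *: unitv R i) (v + t *: unitv R i) = dot v v + (2 * t * v i 0 + t * t).
Proof.
rewrite /dot.
have e : forall j, (v + t *: unitv R i) j 0 * (v + t *: unitv R i) j 0 =
    v j 0 * v j 0 + (if j == i then 2 * t * v i 0 + t * t else 0).
  move=> j; rewrite /unitv !mxE eqxx andbT.
  by case: eqP => [->|_] /=; ring.
rewrite (eq_bigr _ (fun j _ => e j)) big_split /=; congr (_ + _).
by rewrite -big_mkcond big_pred1_eq.
Qed.

Lemma dot_lin2 (u v w : 'cV[R]_m) : dot u (v + w) = dot u v + dot u w.
Proof. by rewrite /dot -big_split; apply: eq_bigr => j _; rewrite mxE mulrDr. Qed.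

Lemma dot_bound (u v : 'cV[R]_m) : `|dot u v| <= m%:R * (`|u| * `|v|).
Proof.
rewrite /dot; apply: le_trans (ler_norm_sum _ _ _) _.
have -> : m%:R * (`|u| * `|v|) = \sum_(j < m) (`|u| * `|v|).
  by rewrite sumr_const card_ord mulr_natl.
apply: ler_sum => j _; rewrite normrM; apply: ler_pM => //; exact: mx_entry_le.
Qed.

End J.

Section J2.
Variables (R : realType) (m : nat) (K : set 'cV[R]_m) (f : 'cV[R]_m -> R) (nu : R).
Hypotheses (Kc : closed_convex_cone K) (Kp : pointed_cone K) (Hf : LHSCB K f nu).

Lemma opt_cond (c s : 'cV[R]_m) (mu0 : R) : interior K s ->
  (forall y, interior K y -> prox_obj f mu0 c s <= prox_obj f mu0 c y) ->
  forall i, (s - c) i 0 + mu0 * derive f s (unitv R i) = 0.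
Proof.
move=> sK hmin i.
set e := unitv R i.
have := @open_interior _ K s sK; move=> /int_ballP [de de0 hde].
pose del := de / (`|e| + 1).
have del0 : 0 < del by rewrite /del divr_gt0// ltr_wpDl.
have inI : forall t : R, `|t| <= del -> interior K (s + t *: e).
  move=> t ht; apply: hde; rewrite opprD addrA subrr add0r normrN normrZ.
  by apply: small_del.
pose a := (s - c) i 0.
pose Q := dot (s - c) (s - c).
pose phi t := prox_obj f mu0 c (s + t *: e).
have hphi : forall t : R, `|t| <= del -> is_derive t 1 phi (a + t + mu0 * derive f (s + t *: e) e).
  move=> t ht.
  have hid : is_derive (t : R) (1 : R) id (1 : R) by exact: is_derive_id.
  have hp := is_deriveD (is_deriveD (is_derive_cst (2^-1 * Q : R) (t : R) (1 : R)) (is_deriveZ a hid))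
     (is_deriveZ (2^-1 : R) (is_deriveM hid hid)).
  have hl := is_deriveZ mu0 (line_d0 Hf (inI t ht)).
  apply: (is_derive_eq (near_eq_is_derive _ (is_deriveD hp hl))).
    near=> x.
    rewrite /phi /prox_obj (addrAC s) dot_expand /= /GRing.scale /=.
    rewrite -/Q -/a !fctE /= /cst /GRing.scale /=. field; rewrite ?pnatr_eq0 //.
  rewrite /GRing.scale /=; field; rewrite ?pnatr_eq0 //.
have hmin' : is_derive (0 : R) 1 phi 0.
  apply: (@derive1_at_min R phi (- del) del 0).
  - lra.
  - move=> t; rewrite in_itv /= => /andP[t1 t2].
    have ht : `|t| <= del by rewrite ler_norml; apply/andP; split; exact: ltW.
    exact: (@ex_derive _ _ _ _ _ _ _ (hphi t ht)).
  - by rewrite in_itv /=; apply/andP; split; lra.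
  - move=> t; rewrite in_itv /= => /andP[t1 t2].
    rewrite /phi scale0r addr0; apply: hmin; apply: inI.
    by rewrite ler_norml; apply/andP; split; exact: ltW.
have h0 := hphi 0 (ltac:(by rewrite normr0 ltW)).
have := @derive_val _ _ _ _ _ _ _ h0.
rewrite (@derive_val _ _ _ _ _ _ _ hmin') scale0r addr0 addr0 => <-.
by [].
Unshelve. all: by end_near.
Qed.

End J2.


Section K.
Variables (R : realType) (m : nat) (K : set 'cV[R]_m) (f : 'cV[R]_m -> R) (nu : R).
Hypotheses (Kc : closed_convex_cone K) (Kp : pointed_cone K) (Hf : LHSCB K f nu).

Lemma dot_grad s d (cc : R) : interior K s ->
  dot d (- (cc *: grad f s)) = cc * (- derive f s d).
Proof.
move=> sK; rewrite (derive_sumv d (f_diff Hf sK)) /dot mulrN mulr_sumr -sumrN.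
by apply: eq_bigr => j _; rewrite !mxE; ring.
Qed.

Lemma dual_int s (cc : R) : interior K s -> 0 < cc ->
  interior (dual_cone K) (- (cc *: grad f s)).
Proof.
move=> sK cc0.
have [eps eps0 heps] := coercive Kc Kp Hf sK.
set z := - (cc *: grad f s).
have m1 : 0 < m%:R + 1 :> R by rewrite ltr_wpDl.
pose del := cc * eps / (m%:R + 1).
apply/int_ballP; exists del.
  by rewrite /del divr_gt0 // mulr_gt0.
move=> w hw d dK.
have -> : w = z + (w - z) by rewrite addrC subrK.
rewrite dot_lin2 dot_grad //.
have hb := dot_bound d (w - z).
have h0 := heps d dK.
set N := `|d| in hb h0 *.
set X := `|w - z| in hb.
have hX : X < del by rewrite /X distrC.
have N0 : 0 <= N by exact: normr_ge0.
have X0 : 0 <= X by exact: normr_ge0.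
have h1 : m%:R * (N * X) <= m%:R * (N * del).
  by apply: ler_wpM2l => //; apply: ler_wpM2l => //; exact: ltW.
have h2 : m%:R * del <= cc * eps.
  have -> : m%:R * del = cc * eps * (m%:R / (m%:R + 1)).
    by rewrite /del mulrC -!mulrA (mulrC _^-1) (mulrC m%:R).
  apply: ler_piMr; first by rewrite mulr_ge0 // ltW.
  by rewrite ler_pdivrMr // mul1r lerDl.
have h3 : N * (m%:R * del) <= N * (cc * eps) by exact: ler_wpM2l.
have h4 : cc * (eps * N) <= cc * (- derive f s d) by apply: ler_wpM2l => //; exact: ltW.
have := ler_norm (- dot d (w - z)); rewrite normrN.
move: hb h1 h3 h4; set Y := dot d (w - z); set G := - derive f s d.
move=> hb h1 h3 h4 h5.
have e1 : m%:R * (N * del) = N * (m%:R * del) by ring.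
have e2 : cc * (eps * N) = N * (cc * eps) by ring.
lra.
Qed.

End K.

Unset Implicit Arguments.

Theorem theorem1 (R : realType) (n m : nat)
    (P : 'M[R]_n) (A : 'M[R]_(m, n)) (q : 'cV[R]_n) (b : 'cV[R]_m)
    (K : set 'cV[R]_m) (f : 'cV[R]_m -> R) (nu : R)
    (xstar : 'cV[R]_n) (sstar zstar : 'cV[R]_m) (mu0 lambda : R)
    (s0 : 'cV[R]_m) :
  P^T = P -> (forall x : 'cV[R]_n, 0 <= (x^T *m P *m x) 0 0) ->
  closed_convex_cone K -> pointed_cone K ->
  LHSCB K f nu ->
  0 < mu0 -> 0 < lambda ->
  (* s0 = S_{K,mu0}(c) with c = s* - lambda z* : the minimizer over int K *)
  interior K s0 ->
  (forall s, interior K s ->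
     prox_obj f mu0 (sstar - lambda *: zstar) s0
       <= prox_obj f mu0 (sstar - lambda *: zstar) s) ->
  let c := sstar - lambda *: zstar in
  let z0 := lambda^-1 *: (s0 - c) in
  let x0 := xstar in
  let r0 := (lambda / mu0) *: resid P A q b x0 s0 z0 in
  let mu := mu0 / lambda in
  [/\ interior K s0, interior (dual_cone K) z0,
      resid P A q b x0 s0 z0 = mu *: r0,
      z0 = - (mu *: grad f s0) &
      dot s0 z0 = nu * mu0 / lambda].
Proof.
move=> _ _ Kc Kp Hf mu0p lap sK hmin c z0 x0 r0 mu.
have oc := opt_cond Hf sK hmin.
have hz : z0 = - (mu *: grad f s0).
  apply/matrixP => i j; rewrite (ord1 j) !mxE.
  have := oc i; rewrite -/c => h.
  have -> : derive f s0 (unitv R i) = - ((s0 - c) i 0) / mu0.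
    apply: (mulfI (lt0r_neq0 mu0p)); rewrite mulrCA divff ?lt0r_neq0 // mulr1; lra.
  rewrite /mu /c !mxE; field; rewrite ?lt0r_neq0 //; split; exact: lt0r_neq0.
split => //.
- rewrite hz; apply: (dual_int Kc Kp Hf sK); exact: divr_gt0.
- rewrite /r0 scalerA /mu (_ : mu0 / lambda * (lambda / mu0) = 1) ?scale1r //.
  by field; rewrite !lt0r_neq0.
- rewrite hz (dot_grad Hf _ _ sK) (euler Hf sK) opprK /mu; field; exact: lt0r_neq0.
Qed.
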